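(* Assume (F) and (H), and let $\bar c=\lim_{\varepsilon\to0^+}c_\varepsilon^*$. Let $\varepsilon_n\to0^+$ be a sequence along which: - $v_{\varepsilon_n}\to\bar v$ uniformly on compact subsets of $\mathbb R$; - $y_{\varepsilon_n}\to\bar y$ uniformly on $[0,1]$. Assume that for some real numbers $z_0<z_1$ and some $v_0\in[0,1)$ one has $\bar v(z)=z-z_0+v_0$ for all $z\in[z_0,z_1]$, and set $v_1:=\bar v(z_1)\in(0,1]$, so that $z_1-z_0=v_1-v_0$. Then $\bar c=\frac{F(v_1)-F(v_0)-h(v_1)+h(v_0)}{v_1-v_0}+\frac{\bar y(v_1)-\bar y(v_0)}{v_1-v_0}$, where $F(v)=\int_0^v f(s)\,ds$.
   Context: Assumptions. - (F): $f\in C([0,1])$, $f(0)=f(1)=0$, $f(s)>0$ for $s\in(0,1)$, and there is $k>0$ with $f(s)\le ks$ and $f(s)\le k(1-s)$ for all $s\in[0,1]$. - (H): $h\in C^2([0,1])$ with $h(0)=h'(0)=0$. Problems and speeds. - For $\varepsilon>0$ and $c\in\mathbb R$, a front profile is a function $v$ with $|v'|<1$, $v(0)=1/2$, satisfying $\varepsilon\big(v'/\sqrt{1-(v')^2}\big)'-(c+h'(v))v'+f(v)=0$ on $\mathbb R$, $v(-\infty)=0$, $v(+\infty)=1$, $v'>0$. - It corresponds to the solution $y(v)=\varepsilon\big(1/\sqrt{1-v'(z(v))^2}-1\big)$, where $z(\cdot)$ is the inverse of $v$, of the first-order problem (P1): $y'=(c+h'(v))\frac{\sqrt{y(2\varepsilon+y)}}{\varepsilon+y}-f(v)$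 on $[0,1]$, $y(0)=y(1)=0$, $y>0$ on $(0,1)$. - $c$ is admissible if (P1) has a solution. The admissible speeds form $[c_\varepsilon^*,+\infty)$, and $c_\varepsilon^*$ (the critical speed) is nondecreasing in $\varepsilon$. - $v_\varepsilon$ is the critical profile (the front profile with $c=c_\varepsilon^*$, $v_\varepsilon(0)=1/2$), and $y_\varepsilon$ is its associated solution of (P1). *)

(* Defs.v *)
From Stdlib Require Import Reals Lra.
From Coquelicot Require Import Coquelicot.
Open Scope R_scope.

Definition hypF (f : R -> R) : Prop :=
  (forall x, 0 <= x <= 1 -> continuous f x) /\
  f 0 = 0 /\ f 1 = 0 /\
  (forall s, 0 < s < 1 -> 0 < f s) /\
  exists k, 0 < k /\ forall s, 0 <= s <= 1 -> f s <= k * s /\ f s <= k * (1 - s).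

(* Assumption (H): h in C^2([0,1]) (read as: twice differentiable with
   continuous second derivative at every point of [0,1]), h(0)=h'(0)=0. *)
Definition hypH (h : R -> R) : Prop :=
  (forall x, 0 <= x <= 1 ->
     ex_derive h x /\ ex_derive (Derive h) x /\ continuous (Derive (Derive h)) x) /\
  h 0 = 0 /\ Derive h 0 = 0.

Definition front_profile (f h : R -> R) (eps c : R) (v : R -> R) : Prop :=
  (forall z, ex_derive v z) /\
  (forall z, Rabs (Derive v z) < 1) /\
  v 0 = 1/2 /\
  (forall z, ex_derive (fun t => Derive v t / sqrt (1 - (Derive v t)^2)) z) /\
  (forall z, eps * Derive (fun t => Derive v t / sqrt (1 - (Derive v t)^2)) z
             - (c + Derive h (v z)) * Derive v z + f (v z) = 0) /\
  is_lim v m_infty 0 /\ is_lim v p_infty 1 /\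
  (forall z, 0 < Derive v z).

Definition P1_solution (f h : R -> R) (eps c : R) (y : R -> R) : Prop :=
  (forall v, 0 <= v <= 1 -> continuous y v) /\
  (forall v, 0 < v < 1 ->
     is_derive y v ((c + Derive h v) * sqrt (y v * (2 * eps + y v)) / (eps + y v) - f v)) /\
  y 0 = 0 /\ y 1 = 0 /\
  (forall v, 0 < v < 1 -> 0 < y v).

Definition admissible (f h : R -> R) (eps : R) : R -> Prop :=
  fun c => exists y, P1_solution f h eps c y.

Definition cstar (f h : R -> R) (eps : R) : R :=
  real (Glb_Rbar (admissible f h eps)).

Definition associated_y (eps : R) (v y : R -> R) : Prop :=
  y 0 = 0 /\ y 1 = 0 /\
  forall z, y (v z) = eps * (1 / sqrt (1 - (Derive v z)^2) - 1).

Definition Fprim (f : R -> R) (x : R) : R := RInt f 0 x.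

(* Main.v *)
Require Import Defs.
From Stdlib Require Import Reals Lra.
From Coquelicot Require Import Coquelicot.
Open Scope R_scope.

Lemma fp_der f h eps c v : front_profile f h eps c v ->
  forall z, is_derive v z (Derive v z).
Proof. intros [H _] z. apply Derive_correct, H. Qed.

Lemma fp_cont f h eps c v : front_profile f h eps c v ->
  forall z, continuity_pt v z.
Proof. intros Hv z. apply continuity_pt_filterlim.
  apply (ex_derive_continuous (K:=R_AbsRing) (V:=R_NormedModule)). exists (Derive v z). now apply (fp_der _ _ _ _ _ Hv). Qed.

Lemma fp_lower f h eps c v : front_profile f h eps c v ->
  forall a b d, a <= b -> (forall x, a <= x <= b -> d <= Derive v x) ->
  v b - v a >= d * (b - a).
Proof.
  intros Hv a b d Hab Hd.
  destruct (MVT_gen v a b (Derive v)) as [x [Hx E]].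
  - intros x _; apply (fp_der _ _ _ _ _ Hv).
  - intros x _; apply (fp_cont _ _ _ _ _ Hv).
  - rewrite Rmin_left in Hx by lra. rewrite Rmax_right in Hx by lra.
    rewrite E. apply Rle_ge, Rmult_le_compat_r; [lra| apply Hd; lra].
Qed.

Lemma fp_incr f h eps c v : front_profile f h eps c v ->
  forall a b, a < b -> v a < v b.
Proof.
  intros Hv a b Hab.
  destruct (MVT_gen v a b (Derive v)) as [x [Hx E]].
  - intros x _; apply (fp_der _ _ _ _ _ Hv).
  - intros x _; apply (fp_cont _ _ _ _ _ Hv).
  - assert (0 < Derive v x) by (apply Hv). assert (0 < Derive v x * (b - a)) by (apply Rmult_lt_0_compat; lra). lra.
Qed.

Lemma fp_range f h eps c v : front_profile f h eps c v ->
  forall z, 0 < v z < 1.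
Proof.
  intros Hv z. pose proof (fp_incr _ _ _ _ _ Hv) as Hi.
  destruct Hv as (_&_&_&_&_&Hm&Hp&_).
  apply is_lim_spec in Hm. apply is_lim_spec in Hp.
  split.
  - destruct (Rlt_le_dec 0 (v z)) as [|H]; [auto|exfalso].
    assert (Hl : v (z-1) < v z) by (apply Hi; lra).
    assert (He : 0 < - v (z-1)) by lra.
    destruct (Hm (mkposreal _ He)) as [M HM]. simpl in HM.
    set (x := Rmin M (z-1) - 1).
    assert (v x < v (z-1)) by (apply Hi; unfold x; pose proof (Rmin_r M (z-1)); lra).
    assert (Hx : x < M) by (unfold x; pose proof (Rmin_l M (z-1)); lra).
    specialize (HM x Hx). rewrite Rminus_0_r in HM.
    apply Rabs_def2 in HM. lra.
  - destruct (Rlt_le_dec (v z) 1) as [|H]; [auto|exfalso].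
    assert (Hl : v z < v (z+1)) by (apply Hi; lra).
    assert (He : 0 < v (z+1) - 1) by lra.
    destruct (Hp (mkposreal _ He)) as [M HM]. simpl in HM.
    set (x := Rmax M (z+1) + 1).
    assert (v (z+1) < v x) by (apply Hi; unfold x; pose proof (Rmax_r M (z+1)); lra).
    assert (Hx : M < x) by (unfold x; pose proof (Rmax_l M (z+1)); lra).
    specialize (HM x Hx). apply Rabs_def2 in HM. lra.
Qed.
Definition gg (v : R -> R) := fun t => Derive v t / sqrt (1 - (Derive v t)^2).

Lemma fp_gder f h eps c v : front_profile f h eps c v ->
  forall z, is_derive (gg v) z (Derive (gg v) z).
Proof. intros Hv z. apply Derive_correct. apply Hv. Qed.

Lemma fp_ode_pt f h eps c v : front_profile f h eps c v ->
  forall z, eps * Derive (gg v) z = (c + Derive h (v z)) * Derive v z - f (v z).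
Proof. intros Hv z. destruct Hv as (_&_&_&_&H&_). specialize (H z). unfold gg. lra. Qed.

Lemma fp_ode f h eps c v : hypF f -> hypH h -> front_profile f h eps c v ->
  forall z0 z1,
  eps * gg v z1 - eps * gg v z0 =
  c * (v z1 - v z0) + (h (v z1) - h (v z0)) - RInt (fun z => f (v z)) z0 z1.
Proof.
  intros HF HH Hv z0 z1.
  set (Phi := fun z => c * v z + h (v z) - eps * gg v z).
  assert (HD : forall z, is_derive Phi z (f (v z))).
  { intros z. pose proof (fp_range _ _ _ _ _ Hv z) as Hr.
    assert (Hh : is_derive h (v z) (Derive h (v z))).
    { apply Derive_correct. apply HH. lra. }
    assert (Hc := is_derive_comp h v z _ _ Hh (fp_der _ _ _ _ _ Hv z)).
    assert (H1 := is_derive_scal v z c _ (fp_der _ _ _ _ _ Hv z)).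
    assert (H2 := is_derive_scal (gg v) z eps _ (fp_gder _ _ _ _ _ Hv z)).
    assert (H3 := is_derive_plus _ _ z _ _ H1 Hc).
    assert (H4 := is_derive_minus _ _ z _ _ H3 H2).
    unfold Phi. eapply is_derive_ext; [|eapply is_derive_ext_loc; [|]].
    2: { apply filter_forall. intros t. reflexivity. }
    intros t; reflexivity.
    replace (f (v z)) with (minus (plus (c * Derive v z) (scal (Derive v z) (Derive h (v z)))) (eps * Derive (gg v) z)).
    exact H4.
    rewrite (fp_ode_pt _ _ _ _ _ Hv z). unfold minus, plus, opp, scal; simpl.
    unfold mult; simpl. ring. }
  assert (HI : is_RInt (fun z => f (v z)) z0 z1 (minus (Phi z1) (Phi z0))).
  { apply (is_RInt_derive (V:=R_CompleteNormedModule)). intros; apply HD.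
    intros x _. apply continuous_comp.
    apply continuity_pt_filterlim, (fp_cont _ _ _ _ _ Hv).
    pose proof (fp_range _ _ _ _ _ Hv x). apply HF. lra. }
  apply (is_RInt_unique (V:=R_CompleteNormedModule)) in HI. rewrite HI. unfold Phi, minus, plus, opp; simpl. ring.
Qed.
Lemma alg_s d : 0 < d < 1 ->
  0 < sqrt (1 - d^2) /\ sqrt (1 - d^2) ^ 2 = 1 - d^2 /\
  sqrt (1 + (d / sqrt (1 - d^2))^2) = 1 / sqrt (1 - d^2) /\
  sqrt (1 - d^2) <= 1.
Proof.
  intros Hd.
  assert (H0 : 0 < 1 - d^2) by nra.
  assert (Hs : 0 < sqrt (1 - d^2)) by (apply sqrt_lt_R0; lra).
  assert (Hs2 : sqrt (1 - d^2) ^ 2 = 1 - d^2) by (rewrite <- Rsqr_pow2; apply Rsqr_sqrt; lra).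
  set (s := sqrt (1 - d^2)) in *.
  split; [auto|split;[auto|split]].
  - replace (1 + (d / s)^2) with (Rsqr (1/s)).
    apply sqrt_Rsqr. apply Rlt_le, Rdiv_lt_0_compat; lra.
    unfold Rsqr. assert (Hd2 : d^2 = 1 - s^2) by lra.
    replace ((d/s)^2) with (d^2/s^2) by (field; lra). rewrite Hd2. field; lra.
  - nra.
Qed.

Lemma fp_dpos f h eps c v : front_profile f h eps c v -> forall z, 0 < Derive v z < 1.
Proof. intros Hv z. destruct Hv as (_&Ha&_&_&_&_&_&Hp). specialize (Ha z); specialize (Hp z).
  apply Rabs_def2 in Ha. lra. Qed.

Lemma fp_Yeq f h eps c v y : front_profile f h eps c v -> associated_y eps v y ->
  forall z, y (v z) = eps * sqrt (1 + (gg v z)^2) - eps.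
Proof.
  intros Hv [_ [_ Hy]] z. rewrite Hy. unfold gg.
  destruct (alg_s _ (fp_dpos _ _ _ _ _ Hv z)) as (_&_&E&_). rewrite E. ring.
Qed.

Lemma fp_Ybound f h eps c v y : 0 < eps -> front_profile f h eps c v -> associated_y eps v y ->
  forall z, 0 <= y (v z) /\ 0 <= eps * gg v z - y (v z) <= eps.
Proof.
  intros He Hv [_ [_ Hy]] z. rewrite Hy. unfold gg.
  pose proof (fp_dpos _ _ _ _ _ Hv z) as Hd.
  destruct (alg_s _ Hd) as (Hs&Hs2&_&Hs1).
  set (d := Derive v z) in *. set (s := sqrt (1 - d^2)) in *.
  assert (Hl : 1 - d <= s) by nra.
  assert (E : eps * (d / s) - eps * (1 / s - 1) = eps * ((d - 1 + s) / s)) by (field; lra).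
  rewrite E. split; [|split].
  - apply Rmult_le_pos; [lra|]. apply Rge_le, Rge_minus, Rle_ge.
    apply (Rmult_le_reg_l s); [lra|]. field_simplify; lra.
  - apply Rmult_le_pos; [lra|]. apply Rdiv_le_0_compat; lra.
  - rewrite <- (Rmult_1_r eps) at 2. apply Rmult_le_compat_l; [lra|].
    apply (Rmult_le_reg_l s); [lra|]. field_simplify; lra.
Qed.

Lemma fp_Yder f h eps c v : front_profile f h eps c v ->
  forall z, is_derive (fun t => eps * sqrt (1 + (gg v t)^2) - eps) z
     (Derive v z * (eps * Derive (gg v) z)).
Proof.
  intros Hv z.
  pose proof (fp_dpos _ _ _ _ _ Hv z) as Hd.
  destruct (alg_s _ Hd) as (Hs&Hs2&E&_).
  assert (Hg := fp_gder _ _ _ _ _ Hv z).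
  assert (H1 : is_derive (fun t => 1 + (gg v t)^2) z (2 * gg v z * Derive (gg v) z)).
  { assert (Hq := is_derive_pow _ 2 _ _ Hg).
    assert (Hr := is_derive_plus (fun _ => 1) _ z _ _ (is_derive_const (K:=R_AbsRing) (V:=R_NormedModule) 1 z) Hq).
    replace (2 * gg v z * Derive (gg v) z) with (plus zero (INR 2 * Derive (gg v) z * gg v z ^ Init.Nat.pred 2)).
    eapply is_derive_ext; [|apply Hr]. intros t; reflexivity.
    unfold plus, zero; simpl. ring. }
  assert (Hp : 0 < 1 + (gg v z)^2) by nra.
  assert (H2 := is_derive_sqrt _ _ _ H1 Hp).
  assert (H3 := is_derive_scal _ z eps _ H2).
  assert (H4 := is_derive_minus _ (fun _ => eps) z _ 0 H3 (is_derive_const eps z)).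
  assert (Ev : eps * (2 * gg v z * Derive (gg v) z / (2 * sqrt (1 + gg v z ^ 2))) = Derive v z * (eps * Derive (gg v) z)).
  { unfold gg at 1 3. rewrite E. field. lra. }
  rewrite <- Ev.
  eapply is_derive_ext; [|eapply is_derive_ext_loc; [apply filter_forall; intros t; reflexivity|]].
  intros t; simpl. reflexivity.
  replace (eps * (2 * gg v z * Derive (gg v) z / (2 * sqrt (1 + gg v z ^ 2)))) with
    (minus (eps * (2 * gg v z * Derive (gg v) z / (2 * sqrt (1 + gg v z ^ 2)))) 0).
  eapply is_derive_ext; [|apply H4]. intros t; simpl. unfold minus, plus, opp; simpl. ring.
  unfold minus, plus, opp; simpl. ring.
Qed.
Lemma fp_gbound f h eps c v M k : front_profile f h eps c v ->
  (forall s, 0 <= s <= 1 -> Rabs (Derive h s) <= M) ->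
  (forall s, 0 < s < 1 -> 0 < f s <= k) ->
  forall z, Rabs (eps * Derive (gg v) z) <= Rabs c + M + k.
Proof.
  intros Hv HM Hk z. rewrite (fp_ode_pt _ _ _ _ _ Hv z).
  pose proof (fp_dpos _ _ _ _ _ Hv z). pose proof (fp_range _ _ _ _ _ Hv z).
  assert (H1 : Rabs (Derive h (v z)) <= M) by (apply HM; lra).
  assert (H2 : 0 < f (v z) <= k) by (apply Hk; lra).
  eapply Rle_trans; [apply Rabs_triang|]. rewrite Rabs_Ropp.
  rewrite Rabs_mult. rewrite (Rabs_right (f (v z))) by lra.
  rewrite (Rabs_right (Derive v z)) by lra.
  assert (H3 : Rabs (c + Derive h (v z)) <= Rabs c + M) by
    (eapply Rle_trans; [apply Rabs_triang|lra]).
  assert (0 <= Rabs (c + Derive h (v z))) by apply Rabs_pos.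
  nra.
Qed.

Lemma fp_lip f h eps c v y C : front_profile f h eps c v -> associated_y eps v y ->
  (forall z, Rabs (eps * Derive (gg v) z) <= C) ->
  forall a b, a <= b -> Rabs (y (v b) - y (v a)) <= C * (v b - v a).
Proof.
  intros Hv Hy HC a b Hab.
  rewrite !(fp_Yeq _ _ _ _ _ _ Hv Hy).
  set (Yt := fun t => eps * sqrt (1 + (gg v t)^2) - eps).
  change (Rabs (Yt b - Yt a) <= C * (v b - v a)).
  assert (HYd := fp_Yder _ _ _ _ _ Hv).
  assert (Hcont : forall (F : R -> R) x dF, is_derive F x dF -> continuity_pt F x).
  { intros F x dF HF. apply continuity_pt_filterlim.
    apply (ex_derive_continuous (K:=R_AbsRing) (V:=R_NormedModule)). exists dF; auto. }
  assert (Hd1 : forall x, is_derive (fun t => Yt t - C * v t) x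
     (Derive v x * (eps * Derive (gg v) x) - C * Derive v x)).
  { intros x. assert (H := is_derive_minus _ _ x _ _ (HYd x) (is_derive_scal _ x C _ (fp_der _ _ _ _ _ Hv x))).
    exact H. }
  assert (Hd2 : forall x, is_derive (fun t => Yt t + C * v t) x
     (Derive v x * (eps * Derive (gg v) x) + C * Derive v x)).
  { intros x. assert (H := is_derive_plus _ _ x _ _ (HYd x) (is_derive_scal _ x C _ (fp_der _ _ _ _ _ Hv x))).
    exact H. }
  destruct (MVT_gen _ a b _ (fun x _ => Hd1 x) (fun x _ => Hcont _ x _ (Hd1 x))) as [x1 [_ E1]].
  destruct (MVT_gen _ a b _ (fun x _ => Hd2 x) (fun x _ => Hcont _ x _ (Hd2 x))) as [x2 [_ E2]].
  pose proof (fp_dpos _ _ _ _ _ Hv x1). pose proof (fp_dpos _ _ _ _ _ Hv x2).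
  pose proof (HC x1) as C1. pose proof (HC x2) as C2.
  apply Rabs_le_between in C1. apply Rabs_le_between in C2.
  assert (P1 : (Derive v x1 * (eps * Derive (gg v) x1) - C * Derive v x1) * (b - a) <= 0).
  { apply Rmult_le_0_r; [|lra]. nra. }
  assert (P2 : 0 <= (Derive v x2 * (eps * Derive (gg v) x2) + C * Derive v x2) * (b - a)).
  { apply Rmult_le_pos; [|lra]. nra. }
  apply Rabs_le. lra.
Qed.
Lemma fp_dY f h eps c v y : 0 < eps -> front_profile f h eps c v -> associated_y eps v y ->
  forall z, y (v z) / (eps + y (v z)) <= Derive v z.
Proof.
  intros He Hv Hy z. pose proof (fp_Ybound _ _ _ _ _ _ He Hv Hy z) as [HY _].
  destruct Hy as [_ [_ Hy]]. rewrite Hy in *.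
  pose proof (fp_dpos _ _ _ _ _ Hv z) as Hd.
  destruct (alg_s _ Hd) as (Hs&Hs2&_&Hs1).
  set (d := Derive v z) in *. set (s := sqrt (1 - d^2)) in *.
  assert (Hl : 1 - d <= s) by nra.
  replace (eps * (1 / s - 1) / (eps + eps * (1 / s - 1))) with (1 - s) by (field; lra).
  lra.
Qed.

Lemma mono_frac a b e : 0 < e -> 0 <= a <= b -> a / (e + a) <= b / (e + b).
Proof. intros He Hab. apply (Rmult_le_reg_r ((e+a)*(e+b))). nra.
  field_simplify; try lra. nra. Qed.

Lemma fp_exists_lt f h eps c v : front_profile f h eps c v ->
  forall s, 0 < s -> exists a, v a < s.
Proof. intros Hv s Hs. destruct Hv as (_&_&_&_&_&Hm&_).
  apply is_lim_spec in Hm. destruct (Hm (mkposreal _ Hs)) as [M HM]. simpl in HM.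
  exists (M - 1). specialize (HM (M-1) ltac:(lra)). apply Rabs_def2 in HM. lra. Qed.

Lemma fp_exists_gt f h eps c v : front_profile f h eps c v ->
  forall s, s < 1 -> exists b, s < v b.
Proof. intros Hv s Hs. destruct Hv as (_&_&_&_&_&_&Hp&_).
  assert (H0 : 0 < 1 - s) by lra.
  apply is_lim_spec in Hp. destruct (Hp (mkposreal _ H0)) as [M HM]. simpl in HM.
  exists (M + 1). specialize (HM (M+1) ltac:(lra)). apply Rabs_def2 in HM. lra. Qed.

Lemma fp_lip2 f h eps c v y C : front_profile f h eps c v -> associated_y eps v y ->
  (forall z, Rabs (eps * Derive (gg v) z) <= C) ->
  forall a b, Rabs (y (v b) - y (v a)) <= C * Rabs (v b - v a).
Proof.
  intros Hv Hy HC a b.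
  destruct (Rle_dec a b) as [H|H].
  - rewrite (Rabs_right (v b - v a)). apply (fp_lip _ _ _ _ _ _ _ Hv Hy HC a b H).
    destruct (Req_dec a b); [subst; lra|]. pose proof (fp_incr _ _ _ _ _ Hv a b). lra.
  - rewrite Rabs_minus_sym, (Rabs_minus_sym (v b)). rewrite (Rabs_right (v a - v b)).
    apply (fp_lip _ _ _ _ _ _ _ Hv Hy HC b a). lra.
    pose proof (fp_incr _ _ _ _ _ Hv b a). lra.
Qed.

Lemma fp_E f h eps c v y C : 0 < eps -> front_profile f h eps c v -> associated_y eps v y ->
  (forall z, Rabs (eps * Derive (gg v) z) <= C) ->
  forall s z, 0 <= s <= 1 -> Rabs (y (v z) - y s) <= C * Rabs (v z - s).
Proof.
  intros He Hv Hy HC s z Hs.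
  assert (HC0 : 0 <= C) by (eapply Rle_trans; [apply Rabs_pos| apply (HC 0)]).
  pose proof (fp_lip2 _ _ _ _ _ _ _ Hv Hy HC) as HL.
  pose proof (fp_range _ _ _ _ _ Hv) as Hr.
  pose proof (fp_Ybound _ _ _ _ _ _ He Hv Hy) as HB.
  pose proof (fp_dY _ _ _ _ _ _ He Hv Hy) as HdY.
  destruct Hs as [[Hs0|Hs0] [Hs1|Hs1]].
  - destruct (fp_exists_lt _ _ _ _ _ Hv s Hs0) as [a Ha].
    destruct (fp_exists_gt _ _ _ _ _ Hv s Hs1) as [b Hb].
    assert (Hc : continuity v) by (intros x; apply (fp_cont _ _ _ _ _ Hv)).
    destruct (IVT_gen v a b s Hc) as [zeta [_ Hz]].
    { split; [apply Rle_trans with (v a); [apply Rmin_l|lra]|apply Rle_trans with (v b); [lra|apply Rmax_r]]. }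
    rewrite <- Hz. apply HL.
  - subst s. destruct Hy as (_&Hy1&_). rewrite Hy1, Rminus_0_r.
    pose proof (Hr z). pose proof (HB z).
    rewrite Rabs_right by lra. rewrite Rabs_left1 by lra.
    destruct (Rle_dec (y (v z)) (C * - (v z - 1))) as [|Hn]; [auto|exfalso].
    set (a := y (v z) - C * (1 - v z)).
    assert (Ha : 0 < a) by (unfold a; lra).
    set (d := a / (eps + a)).
    assert (Hd : 0 < d) by (unfold d; apply Rdiv_lt_0_compat; lra).
    assert (Hlow : forall x, z <= x <= z + 1/d -> d <= Derive v x).
    { intros x Hx. apply Rle_trans with (y (v x) / (eps + y (v x))); [|apply HdY].
      pose proof (HB x). pose proof (Hr x).
      assert (Hxz := HL z x). apply Rabs_le_between in Hxz.
      assert (v z <= v x) by (destruct (Req_dec z x); [subst; lra|]; pose proof (fp_incr _ _ _ _ _ Hv z x); lra).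
      rewrite Rabs_right in Hxz by lra.
      apply mono_frac; [lra|]. split; [lra|]. unfold a. nra. }
    assert (Hdi : 0 < 1/d) by (apply Rdiv_lt_0_compat; lra).
    assert (H1 := fp_lower _ _ _ _ _ Hv z (z + 1/d) d ltac:(lra) Hlow).
    replace (d * (z + 1/d - z)) with 1 in H1 by (field; lra).
    pose proof (Hr (z + 1/d)). lra.
  - subst s. destruct Hy as (Hy0&_&_). rewrite Hy0, Rminus_0_r.
    pose proof (Hr z). pose proof (HB z).
    rewrite Rabs_right by lra. rewrite Rabs_right by lra. rewrite Rminus_0_r.
    destruct (Rle_dec (y (v z)) (C * v z)) as [|Hn]; [auto|exfalso].
    set (a := y (v z) - C * v z).
    assert (Ha : 0 < a) by (unfold a; lra).
    set (d := a / (eps + a)).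
    assert (Hd : 0 < d) by (unfold d; apply Rdiv_lt_0_compat; lra).
    assert (Hlow : forall x, z - 1/d <= x <= z -> d <= Derive v x).
    { intros x Hx. apply Rle_trans with (y (v x) / (eps + y (v x))); [|apply HdY].
      pose proof (HB x). pose proof (Hr x).
      assert (Hxz := HL z x). apply Rabs_le_between in Hxz.
      assert (v x <= v z) by (destruct (Req_dec z x); [subst; lra|]; pose proof (fp_incr _ _ _ _ _ Hv x z); lra).
      rewrite Rabs_left1 in Hxz by lra.
      apply mono_frac; [lra|]. split; [lra|]. unfold a. nra. }
    assert (Hdi : 0 < 1/d) by (apply Rdiv_lt_0_compat; lra).
    assert (H1 := fp_lower _ _ _ _ _ Hv (z - 1/d) z d ltac:(lra) Hlow).
    replace (d * (z - (z - 1/d))) with 1 in H1 by (field; lra).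
    pose proof (Hr (z - 1/d)). lra.
  - lra.
Qed.
Lemma lim_squeeze (u w : nat -> R) l : (forall n, Rabs (u n - l) <= w n) ->
  is_lim_seq w 0 -> is_lim_seq u l.
Proof.
  intros H Hw. apply is_lim_seq_le_le with (u := fun n => l - w n) (w := fun n => l + w n).
  - intros n. specialize (H n). apply Rabs_le_between in H. lra.
  - replace (Finite l) with (Finite (l - 0)) by (f_equal; ring).
    apply is_lim_seq_minus'; [apply is_lim_seq_const|exact Hw].
  - replace (Finite l) with (Finite (l + 0)) by (f_equal; ring).
    apply is_lim_seq_plus'; [apply is_lim_seq_const|exact Hw].
Qed.

Lemma lim_abs0 (u : nat -> R) (l : R) : is_lim_seq u l -> is_lim_seq (fun n => Rabs (u n - l)) 0.
Proof.
  intros H. replace (Finite 0) with (Rbar_abs (Finite (l - l))) by (simpl; f_equal; rewrite Rminus_diag; apply Rabs_R0).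
  apply is_lim_seq_abs. apply is_lim_seq_minus'; [exact H|apply is_lim_seq_const].
Qed.

Lemma cont_of_derive (F : R -> R) x : ex_derive F x -> continuity_pt F x.
Proof. intros H. apply continuity_pt_filterlim.
  apply (ex_derive_continuous (K:=R_AbsRing) (V:=R_NormedModule)); auto. Qed.

Lemma cont_to_pt (F : R -> R) x : continuous F x -> continuity_pt F x.
Proof. intros H. apply continuity_pt_filterlim. exact H. Qed.
Theorem proposition3
  (f h : R -> R) (HF : hypF f) (HH : hypH h)
  (cbar : R)
  (Hcbar : filterlim (cstar f h) (at_right 0) (locally cbar))
  (eps : nat -> R) (Heps_pos : forall n, 0 < eps n) (Heps_lim : is_lim_seq eps 0)
  (v : nat -> R -> R) (y : nat -> R -> R)
  (Hv : forall n, front_profile f h (eps n) (cstar f h (eps n)) (v n))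
  (Hy : forall n, associated_y (eps n) (v n) (y n))
  (vbar ybar : R -> R)
  (Hvconv : forall a b e, 0 < e -> exists N, forall n, (N <= n)%nat ->
              forall z, a <= z <= b -> Rabs (v n z - vbar z) < e)
  (Hyconv : forall e, 0 < e -> exists N, forall n, (N <= n)%nat ->
              forall s, 0 <= s <= 1 -> Rabs (y n s - ybar s) < e)
  (z0 z1 v0 : R) (Hz : z0 < z1) (Hv0 : 0 <= v0 < 1)
  (Hlin : forall z, z0 <= z <= z1 -> vbar z = z - z0 + v0) :
  let v1 := vbar z1 in
  cbar = (Fprim f v1 - Fprim f v0 - h v1 + h v0) / (v1 - v0)
         + (ybar v1 - ybar v0) / (v1 - v0).
Proof.
  intros v1.
  set (cn := fun n => cstar f h (eps n)).
  pose proof HF as HF'. destruct HF' as (HFc & Hf0 & Hf1 & Hfpos & k & Hk & Hfk).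
  assert (Hfb : forall s, 0 < s < 1 -> 0 < f s <= k).
  { intros s Hs. split; [apply Hfpos; auto|]. destruct (Hfk s ltac:(lra)). nra. }
  pose proof HH as HH'. destruct HH' as (Hhd & Hh0 & Hh'0).
  destruct (continuity_ab_maj (fun s => Rabs (Derive h s)) 0 1 ltac:(lra)) as [Mx [HMx _]].
  { intros x Hx. apply continuity_pt_comp with (f1 := Derive h) (f2 := Rabs).
    apply cont_of_derive. apply Hhd; auto. apply Rcontinuity_abs. }
  set (M := Rabs (Derive h Mx)).
  set (Cn := fun n => Rabs (cn n) + M + k).
  assert (HCn : forall n z, Rabs (eps n * Derive (gg (v n)) z) <= Cn n).
  { intros n z. apply (fp_gbound f h _ _ _ _ _ (Hv n)); auto. }
  assert (Lc : is_lim_seq cn cbar).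
  { unfold is_lim_seq, cn. eapply filterlim_comp; [|exact Hcbar].
    intros P HP. apply Heps_lim in HP. destruct HP as [N HN]. exists N.
    intros n Hn. apply HN; auto. }
  assert (Lv : forall z, is_lim_seq (fun n => v n z) (vbar z)).
  { intros z. apply is_lim_seq_spec. intros e. destruct (Hvconv z z e (cond_pos e)) as [N HN].
    exists N. intros n Hn. apply HN; auto; lra. }
  assert (Ly : forall s, 0 <= s <= 1 -> is_lim_seq (fun n => y n s) (ybar s)).
  { intros s Hs. apply is_lim_seq_spec. intros e. destruct (Hyconv e (cond_pos e)) as [N HN].
    exists N. intros n Hn. apply HN; auto. }
  assert (Hvb : forall z, 0 <= vbar z <= 1).
  { intros z. split.
    - assert (H := is_lim_seq_le (fun _ => 0) (fun n => v n z) 0 (vbar z)).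
      simpl in H. apply H. intros n; pose proof (fp_range _ _ _ _ _ (Hv n) z); lra.
      apply is_lim_seq_const. apply Lv.
    - assert (H := is_lim_seq_le (fun n => v n z) (fun _ => 1) (vbar z) 1).
      simpl in H. apply H. intros n; pose proof (fp_range _ _ _ _ _ (Hv n) z); lra.
      apply Lv. apply is_lim_seq_const. }
  assert (Hvz0 : vbar z0 = v0) by (rewrite Hlin; lra).
  assert (Hv1 : v1 = z1 - z0 + v0) by (unfold v1; apply Hlin; lra).
  assert (Hv1r : 0 <= v1 <= 1) by apply Hvb.
  assert (LCn : is_lim_seq Cn (Rabs cbar + M + k)).
  { unfold Cn. apply is_lim_seq_plus'; [apply is_lim_seq_plus'|apply is_lim_seq_const].
    apply (is_lim_seq_abs _ (Finite cbar)), Lc. apply is_lim_seq_const. }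
  assert (Lg : forall zi, is_lim_seq (fun n => eps n * gg (v n) zi) (ybar (vbar zi))).
  { intros zi. apply lim_squeeze with
      (w := fun n => eps n + Cn n * Rabs (v n zi - vbar zi) + Rabs (y n (vbar zi) - ybar (vbar zi))).
    - intros n.
      pose proof (fp_Ybound _ _ _ _ _ _ (Heps_pos n) (Hv n) (Hy n) zi) as [_ HB].
      pose proof (fp_E _ _ _ _ _ _ _ (Heps_pos n) (Hv n) (Hy n) (HCn n) (vbar zi) zi (Hvb zi)) as HE.
      assert (T := Rabs_triang (eps n * gg (v n) zi - y n (v n zi)) (y n (v n zi) - y n (vbar zi))).
      assert (T2 := Rabs_triang (eps n * gg (v n) zi - y n (vbar zi)) (y n (vbar zi) - ybar (vbar zi))).
      replace (eps n * gg (v n) zi - y n (v n zi) + (y n (v n zi) - y n (vbar zi))) with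
        (eps n * gg (v n) zi - y n (vbar zi)) in T by ring.
      replace (eps n * gg (v n) zi - y n (vbar zi) + (y n (vbar zi) - ybar (vbar zi))) with
        (eps n * gg (v n) zi - ybar (vbar zi)) in T2 by ring.
      rewrite (Rabs_right (eps n * gg (v n) zi - y n (v n zi))) in T by lra. lra.
    - replace (Finite 0) with (Finite (0 + (Rabs cbar + M + k) * 0 + 0)) by (f_equal; ring).
      apply is_lim_seq_plus'; [apply is_lim_seq_plus'|].
      + exact Heps_lim.
      + apply is_lim_seq_mult'; [exact LCn|]. apply lim_abs0, Lv.
      + apply lim_abs0, Ly, Hvb. }
  assert (Hcf : forall s, 0 <= s <= 1 -> continuity_pt f s) by (intros; apply cont_to_pt, HFc; auto).
  assert (LI : is_lim_seq (fun n => RInt (fun z => f (v n z)) z0 z1) (RInt f v0 v1)).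
  { set (fl := fun z => f (z - z0 + v0)).
    assert (Hexf : ex_RInt f v0 v1).
    { apply (ex_RInt_continuous (V:=R_CompleteNormedModule)). intros x Hx. apply HFc.
      rewrite Rmin_left in Hx by lra. rewrite Rmax_right in Hx by lra. lra. }
    assert (HJ : RInt fl z0 z1 = RInt f v0 v1).
    { assert (H := RInt_comp_lin (V:=R_CompleteNormedModule) f 1 (v0 - z0) z0 z1).
      replace (1 * z0 + (v0 - z0)) with v0 in H by ring.
      replace (1 * z1 + (v0 - z0)) with v1 in H by lra.
      rewrite <- (H Hexf). apply RInt_ext. intros x _. unfold fl, scal; simpl. unfold mult; simpl. rewrite Rmult_1_l. f_equal. ring. }
    assert (Hexl : ex_RInt fl z0 z1).
    { apply (ex_RInt_continuous (V:=R_CompleteNormedModule)). intros x Hx.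
      rewrite Rmin_left in Hx by lra. rewrite Rmax_right in Hx by lra.
      unfold fl. apply continuous_comp.
      apply (ex_derive_continuous (K:=R_AbsRing) (V:=R_NormedModule)). auto_derive; auto.
      apply HFc. lra. }
    assert (Hexn : forall n, ex_RInt (fun z => f (v n z)) z0 z1).
    { intros n. apply (ex_RInt_continuous (V:=R_CompleteNormedModule)). intros x Hx.
      apply continuous_comp. apply continuity_pt_filterlim, (fp_cont _ _ _ _ _ (Hv n)).
      pose proof (fp_range _ _ _ _ _ (Hv n) x). apply HFc. lra. }
    rewrite <- HJ. apply is_lim_seq_spec. intros e.
    assert (He' : 0 < e / (z1 - z0 + 1)) by (apply Rdiv_lt_0_compat; [apply cond_pos|lra]).
    destruct (Heine_cor2 Hcf (mkposreal _ He')) as [dl Hdl]. simpl in Hdl.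
    destruct (Hvconv z0 z1 dl (cond_pos dl)) as [N HN]. exists N. intros n Hn.
    replace (RInt (fun z => f (v n z)) z0 z1 - RInt fl z0 z1) with
      (RInt (fun z => f (v n z) - fl z) z0 z1).
    2: { assert (H := RInt_minus (V:=R_CompleteNormedModule) _ _ _ _ (Hexn n) Hexl). exact H. }
    eapply Rle_lt_trans.
    apply abs_RInt_le_const with (M := e / (z1 - z0 + 1)); [lra| |].
    { assert (H := ex_RInt_minus (V:=R_NormedModule) _ _ _ _ (Hexn n) Hexl). exact H. }
    { intros t Ht. unfold fl. rewrite <- Hlin by lra. apply Rlt_le. apply Hdl.
      pose proof (fp_range _ _ _ _ _ (Hv n) t); lra. apply Hvb. apply HN; auto. }
    apply (Rmult_lt_reg_r (z1 - z0 + 1)); [lra|]. field_simplify; [|lra].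
    pose proof (cond_pos e). nra. }
  assert (Hid : forall n, eps n * gg (v n) z1 - eps n * gg (v n) z0 =
     cn n * (v n z1 - v n z0) + (h (v n z1) - h (v n z0)) - RInt (fun z => f (v n z)) z0 z1).
  { intros n. apply (fp_ode f h _ _ _ HF HH (Hv n)). }
  assert (L1 : is_lim_seq (fun n => eps n * gg (v n) z1 - eps n * gg (v n) z0) (ybar v1 - ybar v0)).
  { rewrite <- Hvz0. apply is_lim_seq_minus'; apply Lg. }
  assert (Hhc : forall s, 0 <= s <= 1 -> continuity_pt h s) by (intros; apply cont_of_derive, Hhd; auto).
  assert (L2 : is_lim_seq (fun n => eps n * gg (v n) z1 - eps n * gg (v n) z0)
     (cbar * (v1 - v0) + (h v1 - h v0) - RInt f v0 v1)).
  { eapply is_lim_seq_ext. intros n; symmetry; apply Hid.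
    apply is_lim_seq_minus'; [apply is_lim_seq_plus'|exact LI].
    - apply is_lim_seq_mult'; [exact Lc|]. rewrite <- Hvz0. apply is_lim_seq_minus'; apply Lv.
    - apply is_lim_seq_minus'.
      + apply is_lim_seq_continuous. apply Hhc; auto. apply Lv.
      + rewrite <- Hvz0. apply is_lim_seq_continuous. apply Hhc; rewrite Hvz0; lra. apply Lv. }
  apply is_lim_seq_unique in L1. apply is_lim_seq_unique in L2. rewrite L1 in L2. injection L2; intros E.
  assert (HF2 : Fprim f v1 - Fprim f v0 = RInt f v0 v1).
  { unfold Fprim. assert (Hex : forall a b, 0 <= a <= 1 -> 0 <= b <= 1 -> ex_RInt f a b).
    { intros a b Ha Hb. apply (ex_RInt_continuous (V:=R_CompleteNormedModule)). intros x Hx. apply HFc.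
      split; [apply Rle_trans with (Rmin a b); [apply Rmin_glb; lra|lra]|apply Rle_trans with (Rmax a b); [lra|apply Rmax_lub; lra]]. }
    rewrite <- (RInt_Chasles (V:=R_CompleteNormedModule) f 0 v0 v1) by (apply Hex; lra).
    unfold plus; simpl. ring. }
  rewrite HF2. assert (Hd : v1 - v0 <> 0) by lra. field_simplify; [|auto]. 
  apply (Rmult_eq_reg_r (v1 - v0)); [|auto]. field_simplify; [|auto]. lra.
Qed.
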